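(* Let $A\in\mathbb{R}^{m\times n}$ be semi-monotone (i.e. $A^{\dagger}\geq 0$), let $A=M-N=U-V$ be two proper weak regular splittings of $A$, and let $H=U^{\dagger}VM^{\dagger}N$. Suppose $R(M+U-A)=R(A)$ and $N(M+U-A)=N(A)$. Let $B=M(M+U-A)^{\dagger}U$ and $C=B-A$. Then $A=B-C$ is a proper weak regular splitting of $A$ which is induced by $H$, i.e. $B^{\dagger}=U^{\dagger}(VM^{\dagger}+I)$ and $B^{\dagger}C=H$; moreover it is the unique proper splitting $A=\bar B-\bar C$ with $\bar B^{\dagger}\bar C=H$.
   Context: All matrices are real. $X^{\dagger}$ denotes the Moore–Penrose inverse of $X$, and $\rho(\cdot)$ the spectral radius. For a matrix $X$, $X\geq 0$ means that all entries of $X$ are nonnegative and at least one entry is positive; $X\geq Y$ means $X-Y\geq 0$. $R(X)$ and $N(X)$ denote range and null space. A splitting $A=U-V$ is proper if $R(U)=R(A)$ and $N(U)=N(A)$; it is a proper weak regular splitting if it is proper, $U^{\dagger}\geq 0$ and $U^{\dagger}V\geq 0$. $H$ is the iteration matrix of the alternating scheme $x^{i+1}=U^{\dagger}VM^{\dagger}Nx^{i}+U^{\dagger}(VM^{\dagger}+I)b$; a splitting $A=B-C$ is said to be induced by $H$ if $B^{\dagger}C=H$ (with $B^{\dagger}=U^{\dagger}(VM^{\dagger}+I)$). *)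

(* Defs.v *)
From mathcomp Require Import all_boot all_order all_algebra.
From mathcomp Require Import boolp classical_sets reals.
Set Implicit Arguments. Unset Strict Implicit. Unset Printing Implicit Defensive.
Import Order.TTheory GRing.Theory Num.Theory.
Local Open Scope ring_scope.

Section Defs.
Variable R : realType.

Definition is_MP_inverse m n (A : 'M[R]_(m, n)) (X : 'M[R]_(n, m)) : Prop :=
  [/\ A *m X *m A = A, X *m A *m X = X,
      (A *m X)^T = A *m X & (X *m A)^T = X *m A].

(* The Moore-Penrose inverse A^dagger (it exists and is unique for real
   matrices; xget picks it). *)
Definition mpinv m n (A : 'M[R]_(m, n)) : 'M[R]_(n, m) :=
  xget 0 (fun X => is_MP_inverse A X).

Definition mx_ge0 m n (X : 'M[R]_(m, n)) : Prop := forall i j, 0 <= X i j.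

Definition same_range m n (A B : 'M[R]_(m, n)) : Prop :=
  forall y : 'cV[R]_m, (exists x, A *m x = y) <-> (exists x, B *m x = y).

Definition same_null m n (A B : 'M[R]_(m, n)) : Prop :=
  forall x : 'cV[R]_n, A *m x = 0 <-> B *m x = 0.

Definition proper_splitting m n (A U V : 'M[R]_(m, n)) : Prop :=
  [/\ A = U - V, same_range U A & same_null U A].

Definition proper_weak_regular_splitting m n (A U V : 'M[R]_(m, n)) : Prop :=
  [/\ proper_splitting A U V, mx_ge0 (mpinv U) & mx_ge0 (mpinv U *m V)].

End Defs.

(* Main.v *)
Require Import Defs.
From mathcomp Require Import all_boot all_order all_algebra.
From mathcomp Require Import boolp classical_sets reals.
Import GRing.Theory Num.Theory.
Local Open Scope ring_scope.

Section MP.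
Variable R : realType.
Set Implicit Arguments. Unset Strict Implicit.

Lemma rv_self_eq0 k (y : 'rV[R]_k) : y *m y^T = 0 -> y = 0.
Proof.
move=> /matrixP /(_ 0 0); rewrite !mxE => H.
have H2 : forall j : 'I_k, true -> y 0 j * y 0 j = 0.
  apply: psumr_eq0P => [j _|]; first by rewrite -expr2 sqr_ge0.
  rewrite -[RHS]H; apply: eq_bigr => j _; by rewrite !mxE.
apply/matrixP => i j; rewrite (ord1 i) !mxE.
by have /eqP := H2 j isT; rewrite mulf_eq0 orbb => /eqP.
Qed.

Lemma gram_unit r k (G : 'M[R]_(r, k)) : row_free G -> G *m G^T \in unitmx.
Proof.
move=> fG; rewrite -row_free_unit -kermx_eq0; apply/eqP/row_matrixP => i.
rewrite row0; set x := row i (kermx (G *m G^T)).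
have hx : x *m (G *m G^T) = 0 by rewrite /x -row_mul mulmx_ker row0.
have : (x *m G) *m (x *m G)^T = 0 by rewrite trmx_mul !mulmxA -(mulmxA x) hx mul0mx.
move/rv_self_eq0/eqP; rewrite mulmx_free_eq0 //; by move/eqP.
Qed.

Lemma mp_fact m n r (F : 'M[R]_(m, r)) (G : 'M[R]_(r, n)) :
  G *m G^T \in unitmx -> F^T *m F \in unitmx ->
  is_MP_inverse (F *m G) (G^T *m invmx (G *m G^T) *m invmx (F^T *m F) *m F^T).
Proof.
move=> uG uF.
set P := invmx (G *m G^T); set Q := invmx (F^T *m F).
have hP : G *m G^T *m P = 1%:M by rewrite mulmxV.
have hQ : Q *m (F^T *m F) = 1%:M by rewrite mulVmx.
have e1 : F *m G *m (G^T *m P *m Q *m F^T) = F *m Q *m F^T.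
  by rewrite -!mulmxA (mulmxA G) (mulmxA (G *m G^T)) hP mul1mx.
have e2 : (G^T *m P *m Q *m F^T) *m (F *m G) = G^T *m P *m G.
  by rewrite -!mulmxA (mulmxA (F^T)) (mulmxA Q) hQ mul1mx.
have sP : P^T = P by rewrite /P trmx_inv trmx_mul trmxK.
have sQ : Q^T = Q by rewrite /Q trmx_inv trmx_mul trmxK.
split.
- by rewrite e1 -!mulmxA (mulmxA (F^T)) (mulmxA Q) hQ mul1mx.
- by rewrite e2 -!mulmxA (mulmxA G) (mulmxA (G *m G^T)) hP mul1mx.
- by rewrite e1 !trmx_mul trmxK sQ mulmxA.
- by rewrite e2 !trmx_mul trmxK sP mulmxA.
Qed.

Lemma mp_exists m n (A : 'M[R]_(m, n)) : exists X, is_MP_inverse A X.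
Proof.
have uG : row_base A *m (row_base A)^T \in unitmx.
  by apply: gram_unit; exact: row_base_free.
have uF : (col_base A)^T *m col_base A \in unitmx.
  rewrite -{2}(trmxK (col_base A)); apply: gram_unit.
  by rewrite /row_free mxrank_tr; have := col_base_full A; rewrite /row_full.
have := mp_fact uG uF; rewrite mulmx_base => h; eexists; exact: h.
Qed.

Lemma mpP m n (A : 'M[R]_(m, n)) : is_MP_inverse A (mpinv A).
Proof. rewrite /mpinv; apply: (@xgetPex _ 0 (fun X => is_MP_inverse A X)); exact: mp_exists. Qed.

Lemma mp_unique m n (A : 'M[R]_(m, n)) X Y :
  is_MP_inverse A X -> is_MP_inverse A Y -> X = Y.
Proof.
case=> a1 a2 a3 a4 [b1 b2 b3 b4].
have hXA : X *m A = Y *m A.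
  rewrite -a4 trmx_mul -{1}b1 !trmx_mul mulmxA -(trmx_mul Y A) -mulmxA.
  rewrite -(trmx_mul X A) b4 a4 mulmxA -(mulmxA Y A X) -mulmxA a1 //.
have hAX : A *m X = A *m Y.
  rewrite -a3 trmx_mul -{1}b1 !trmx_mul mulmxA -(trmx_mul A X).
  by rewrite -(trmx_mul A Y) a3 b3 mulmxA a1.
by rewrite -a2 -mulmxA hAX mulmxA hXA b2.
Qed.

Lemma mp_eq m n (A : 'M[R]_(m, n)) X : is_MP_inverse A X -> mpinv A = X.
Proof. by move=> h; apply: (mp_unique (mpP A) h). Qed.

Lemma mpK m n (A : 'M[R]_(m, n)) : mpinv (mpinv A) = A.
Proof. by apply: mp_eq; case: (mpP A) => ????; split. Qed.

Lemma cV_ext m n (F G : 'M[R]_(m, n)) :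
  (forall x : 'cV[R]_n, F *m x = G *m x) -> F = G.
Proof.
move=> h; apply/matrixP => i j.
by move: (h (delta_mx j 0)) => /matrixP/(_ i 0); rewrite -!colE !mxE.
Qed.

Lemma proj_range m n (P Q : 'M[R]_(m, n)) :
  same_range P Q -> P *m mpinv P = Q *m mpinv Q.
Proof.
move=> hr; case: (mpP P) => p1 p2 p3 p4; case: (mpP Q) => q1 q2 q3 q4.
have h1 : P *m mpinv P *m Q = Q.
  apply: cV_ext => x; have [z hz] : exists z, P *m z = Q *m x by apply/hr; exists x.
  by rewrite -mulmxA -hz mulmxA p1.
have h2 : Q *m mpinv Q *m P = P.
  apply: cV_ext => x; have [z hz] : exists z, Q *m z = P *m x by apply/hr; exists x.
  by rewrite -mulmxA -hz mulmxA q1.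
have e1 : P *m mpinv P *m (Q *m mpinv Q) = Q *m mpinv Q by rewrite mulmxA h1.
have e2 : Q *m mpinv Q *m (P *m mpinv P) = P *m mpinv P by rewrite mulmxA h2.
by rewrite -p3 -e2 trmx_mul q3 p3 e1.
Qed.

Lemma proj_null m n (P Q : 'M[R]_(m, n)) :
  same_null P Q -> mpinv P *m P = mpinv Q *m Q.
Proof.
move=> hn; case: (mpP P) => p1 p2 p3 p4; case: (mpP Q) => q1 q2 q3 q4.
have h1 : mpinv P *m P *m (1%:M - mpinv Q *m Q) = 0.
  apply: cV_ext => x; rewrite mul0mx -!mulmxA.
  suff -> : P *m ((1%:M - mpinv Q *m Q) *m x) = 0 by rewrite mulmx0.
  apply/hn; rewrite mulmxA mulmxBr mulmx1 mulmxA q1 subrr mul0mx //.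
have h2 : mpinv Q *m Q *m (1%:M - mpinv P *m P) = 0.
  apply: cV_ext => x; rewrite mul0mx -!mulmxA.
  suff -> : Q *m ((1%:M - mpinv P *m P) *m x) = 0 by rewrite mulmx0.
  apply/hn; rewrite mulmxA mulmxBr mulmx1 mulmxA p1 subrr mul0mx //.
move: h1 h2; rewrite !mulmxBr !mulmx1 => /eqP; rewrite subr_eq0 => /eqP e1.
move/eqP; rewrite subr_eq0 => /eqP e2.
by rewrite -p4 {1}e1 trmx_mul q4 p4 -e2.
Qed.

Lemma ge0_mul m n p (P : 'M[R]_(m, n)) (Q : 'M[R]_(n, p)) :
  mx_ge0 P -> mx_ge0 Q -> mx_ge0 (P *m Q).
Proof.
move=> hP hQ i j; rewrite mxE; apply: sumr_ge0 => k _; exact: mulr_ge0.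
Qed.

Lemma ge0_add m n (P Q : 'M[R]_(m, n)) :
  mx_ge0 P -> mx_ge0 Q -> mx_ge0 (P + Q).
Proof. by move=> hP hQ i j; rewrite mxE; apply: addr_ge0. Qed.
End MP.

Lemma zid (T : zmodType) (a b c : T) : a - (b - c + (a - b)) = c.
Proof. by rewrite [b - c + _]addrC addrA subrK opprB addrC subrK. Qed.

Lemma split_formula (R : realType) m n (A Bb Cb : 'M[R]_(m, n)) :
  proper_splitting A Bb Cb ->
  mpinv Bb = (mpinv A *m A - mpinv Bb *m Cb) *m mpinv A.
Proof.
case=> hA hr hn; case: (mpP Bb) => b1 b2 b3 b4.
have e1 := proj_range hr; have e2 := proj_null hn.
rewrite -{1}b2 -mulmxA e1 mulmxA; congr (_ *m _).
by rewrite -e2 {1}hA mulmxBr.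
Qed.

Theorem theorem4p4 (R : realType) (m n : nat) (A M N U V : 'M[R]_(m, n)) :
  mx_ge0 (mpinv A) ->
  proper_weak_regular_splitting A M N ->
  proper_weak_regular_splitting A U V ->
  same_range (M + U - A) A ->
  same_null (M + U - A) A ->
  let H := mpinv U *m V *m mpinv M *m N in
  let B := M *m mpinv (M + U - A) *m U in
  let C := B - A in
  [/\ proper_weak_regular_splitting A B C,
      mpinv B = mpinv U *m (V *m mpinv M + 1%:M),
      mpinv B *m C = H &
      forall Bb Cb : 'M[R]_(m, n),
        proper_splitting A Bb Cb -> mpinv Bb *m Cb = H -> Bb = B /\ Cb = C].
Proof.
move=> _ [[hAM rM nM] gM gMN] [[hAU rU nU] gU gUV] rW nW H B C.
set W := M + U - A in rW nW H B C *.
case: (mpP A) => a1 a2 a3 a4; case: (mpP M) => m1 m2 m3 m4.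
case: (mpP U) => u1 u2 u3 u4; case: (mpP W) => w1 w2 w3 w4.
have PM := proj_range rM; have PU := proj_range rU; have PW := proj_range rW.
have QM := proj_null nM; have QU := proj_null nU; have QW := proj_null nW.
set X := mpinv U *m W *m mpinv M.
have BX : B *m X = M *m mpinv M.
  rewrite /B /X -!mulmxA (mulmxA U) PU -PW !mulmxA.
  rewrite -(mulmxA M (mpinv W) W) -(mulmxA M _ (mpinv W)) w2.
  by rewrite -(mulmxA M (mpinv W) W) QW -QM mulmxA m1.
have XB : X *m B = mpinv U *m U.
  rewrite /B /X -!mulmxA (mulmxA (mpinv M)) QM -QW !mulmxA.
  rewrite -(mulmxA (mpinv U) W (mpinv W)) -(mulmxA (mpinv U) _ W) w1.
  by rewrite -(mulmxA (mpinv U) W (mpinv W)) PW -PU mulmxA u2.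
have BXB : B *m X *m B = B by rewrite BX /B !mulmxA m1.
have XBX : X *m B *m X = X by rewrite XB /X !mulmxA u2.
have hBi : mpinv B = X.
  by apply: mp_eq; split => //; rewrite ?BX ?XB.
have hWV : W = M + V by rewrite /W hAU opprB addrCA addrK addrC.
have hX2 : X = mpinv U *m (V *m mpinv M + 1%:M).
  rewrite /X hWV (mulmxDr (mpinv U) M) mulmxDl -(mulmxA (mpinv U) M) PM -PU mulmxA u2.
  by rewrite mulmxDr mulmx1 mulmxA addrC.
have hV : V = U - A by rewrite hAU opprB addrC subrK.
have hMA : mpinv M *m A = mpinv A *m A - mpinv M *m N.
  by rewrite {1}hAM mulmxBr QM.
have hUA : mpinv U *m A = mpinv U *m U - mpinv U *m V by rewrite {1}hAU mulmxBr.
have hVA : V *m (mpinv A *m A) = V.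
  by rewrite {1}hV mulmxBl -{1}QU !mulmxA u1 a1 -hV.
have hH : X *m C = H.
  rewrite /C mulmxBr XB hX2 mulmxDr mulmx1 mulmxDl /H -!mulmxA hMA hUA.
  by rewrite !mulmxBr hVA zid.
have hA' : A = B - C by rewrite /C opprB addrC subrK.
have pB : proper_splitting A B C.
  split => //.
  - move=> y; split => [[x <-]|[x <-]].
    + by apply/rM; exists (mpinv W *m U *m x); rewrite /B !mulmxA.
    + by exists (X *m (A *m x)); rewrite mulmxA BX PM mulmxA a1.
  - move=> x; split => h.
    + have hx : mpinv U *m U *m x = 0 by rewrite -XB -mulmxA h mulmx0.
      by apply/nU; rewrite -u1 -(mulmxA U (mpinv U) U) -mulmxA hx mulmx0.
    + have hU : U *m x = 0 by apply/nU.
      by rewrite /B -mulmxA hU mulmx0.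
have hBC : mpinv B *m C = H by rewrite hBi hH.
split => //.
- split => //.
  + rewrite hBi hX2 mulmxDr mulmx1 mulmxA; apply: ge0_add => //.
    exact: (ge0_mul gUV gM).
  + have := ge0_mul gUV gMN; rewrite mulmxA -/H -hBC; exact.
- by rewrite hBi hX2.
- move=> Bb Cb hsp hBH.
  have e1 := split_formula hsp; have e2 := split_formula pB.
  have hm : mpinv Bb = mpinv B by rewrite e1 hBH e2 hBC.
  have hBb : Bb = B by rewrite -(mpK Bb) hm mpK.
  split => //; case: hsp => hA _ _.
  by rewrite /C -hBb {1}hA opprB addrC subrK.
Qed.
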